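(* Consider the planar system $$\frac{dC}{dt} = 1 + m_1\frac{CL}{1+L} - m_2\frac{CL}{1+m_3C} - m_4C,\qquad \frac{dL}{dt} = L - m_5 CL,$$ with positive parameters $m_1,\dots,m_5$. Let $$a=-\frac{m_2}{1+m_3/m_5},\quad b=m_1+m_5-m_4-\frac{m_2}{1+m_3/m_5},\quad c=m_5-m_4,\quad \Delta=b^2-4ac,$$ and, assuming $\Delta\ge 0$ (so that the equilibria $E_2=(1/m_5,L_2)$ and $E_3=(1/m_5,L_3)$ exist), let $L_2=\frac{-b-\sqrt{\Delta}}{2a}$ and $L_3=\frac{-b+\sqrt{\Delta}}{2a}$. Then: 1. $L_2\ge 0$ if and only if $m_5\ge m_4$ or $m_2\le (1+m_3/m_5)(m_1+m_5-m_4)$. 2. $L_3\ge 0$ if and only if $m_2\le (1+m_3/m_5)(m_1+m_5-m_4)$ and $m_5\le m_4$.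
   Context: Nondimensional model of CAR-T cells $C$ and lymphoma cells $L$; $E_2,E_3$ are the coexistence equilibria with $C=1/m_5$, and $L_2,L_3$ are the roots of $aL^2+bL+c=0$. *)

(* Defs.v *)
From Stdlib Require Import Reals.
Open Scope R_scope.

Definition dC (m1 m2 m3 m4 m5 C L : R) : R :=
  1 + m1 * (C * L / (1 + L)) - m2 * (C * L / (1 + m3 * C)) - m4 * C.
Definition dL (m5 C L : R) : R := L - m5 * C * L.

(* Disc = the discriminant Delta = b^2 - 4ac of the paper.
   Coefficients of the quadratic a L^2 + b L + c = 0 for L at C = 1/m5. *)
Definition coef_a (m2 m3 m5 : R) : R := - (m2 / (1 + m3 / m5)).
Definition coef_b (m1 m2 m3 m4 m5 : R) : R :=
  m1 + m5 - m4 - m2 / (1 + m3 / m5).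
Definition coef_c (m4 m5 : R) : R := m5 - m4.
Definition Disc (m1 m2 m3 m4 m5 : R) : R :=
  coef_b m1 m2 m3 m4 m5 ^ 2 - 4 * coef_a m2 m3 m5 * coef_c m4 m5.

Definition L2 (m1 m2 m3 m4 m5 : R) : R :=
  (- coef_b m1 m2 m3 m4 m5 - sqrt (Disc m1 m2 m3 m4 m5)) / (2 * coef_a m2 m3 m5).
Definition L3 (m1 m2 m3 m4 m5 : R) : R :=
  (- coef_b m1 m2 m3 m4 m5 + sqrt (Disc m1 m2 m3 m4 m5)) / (2 * coef_a m2 m3 m5).

(* Main.v *)
Require Import Defs.
From Stdlib Require Import Reals Lra Psatz.
Local Open Scope R_scope.

Lemma div_pos_iff (x k : R) : 0 < k -> (0 <= x / k <-> 0 <= x).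
Proof.
  intros Hk. split; intros H.
  - replace x with (x / k * k) by (field; lra). nra.
  - unfold Rdiv. apply Rmult_le_pos; [lra|]. left; apply Rinv_0_lt_compat; lra.
Qed.

Lemma core (b c k s : R) : 0 < k -> 0 <= s -> s * s = b ^ 2 + 4 * k * c ->
  (0 <= b + s <-> (c >= 0 \/ 0 <= b)) /\ (0 <= b - s <-> (0 <= b /\ c <= 0)).
Proof.
  intros Hk Hs Hss. split; split.
  - intros H. destruct (Rle_dec 0 b); [right; lra|].
    destruct (Rle_dec 0 c); [left; lra|]. exfalso. nra.
  - intros [H|H]; [|lra]. destruct (Rle_dec 0 (b + s)); [lra|]. nra.
  - intros H. split; [lra|]. nra.
  - intros [H1 H2]. destruct (Rle_dec 0 (b - s)); [lra|]. nra.
Qed.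

Theorem proposition4 (m1 m2 m3 m4 m5 : R) :
  0 < m1 -> 0 < m2 -> 0 < m3 -> 0 < m4 -> 0 < m5 ->
  0 <= Disc m1 m2 m3 m4 m5 ->
  (0 <= L2 m1 m2 m3 m4 m5 <->
     (m5 >= m4 \/ m2 <= (1 + m3 / m5) * (m1 + m5 - m4))) /\
  (0 <= L3 m1 m2 m3 m4 m5 <->
     (m2 <= (1 + m3 / m5) * (m1 + m5 - m4) /\ m5 <= m4)).
Proof.
  intros H1 H2 H3 H4 H5 HD.
  assert (Hq : 0 < 1 + m3 / m5).
  { assert (0 < m3 / m5) by (apply Rdiv_lt_0_compat; lra). lra. }
  set (q := 1 + m3 / m5) in *.
  set (k := m2 / q).
  assert (Hk : 0 < k) by (apply Rdiv_lt_0_compat; lra).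
  assert (Heq : m2 <= q * (m1 + m5 - m4) <-> 0 <= m1 + m5 - m4 - k).
  { unfold k. replace m2 with (m2 / q * q) at 1 by (field; lra).
    split; intros; nra. }
  set (s := sqrt (Disc m1 m2 m3 m4 m5)).
  assert (Hs : 0 <= s) by apply sqrt_pos.
  assert (Hss : s * s = (m1 + m5 - m4 - k) ^ 2 + 4 * k * (m5 - m4)).
  { unfold s. rewrite sqrt_sqrt by exact HD. unfold Disc, coef_a, coef_b, coef_c.
    fold q. fold k. ring. }
  destruct (core (m1 + m5 - m4 - k) (m5 - m4) k s Hk Hs Hss) as [[A1 A2] [B1 B2]].
  assert (EL2 : L2 m1 m2 m3 m4 m5 = ((m1 + m5 - m4 - k) + s) / (2 * k)).
  { unfold L2, coef_a, coef_b. fold q. fold k. fold s. field. lra. }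
  assert (EL3 : L3 m1 m2 m3 m4 m5 = ((m1 + m5 - m4 - k) - s) / (2 * k)).
  { unfold L3, coef_a, coef_b. fold q. fold k. fold s. field. lra. }
  rewrite EL2, EL3, !div_pos_iff by lra.
  split; split; intros H.
  - destruct (A1 H) as [G|G]; [left; lra|right; apply Heq; exact G].
  - apply A2. destruct H as [G|G]; [left; lra|right; apply Heq; exact G].
  - destruct (B1 H) as [G1 G2]. split; [apply Heq; exact G1|lra].
  - destruct H as [G1 G2]. apply B2. split; [apply Heq; exact G1|lra].
Qed.
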